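(* Let $G=(V,E)$ be a hypergraph, let $(Y_1,Y_2,W,Z)$ be a partition of $V$, and let $A_1:=Y_1\cup W$ and $A_2:=Y_2\cup W$. Then \[d(A_1)+d(A_2)=\sigma(Y_1,Y_2,W,Z).\]
   Context: A hypergraph $G=(V,E)$ has finite vertex set $V$ and finite multiset $E$ of hyperedges (subsets of $V$). For $X\subseteq V$, $d(X)$ is the number of hyperedges meeting both $X$ and $V\setminus X$. For a partition $(Y_1,\dots,Y_p,W,Z)$ of $V$: $\mathrm{cost}(Y_1,\dots,Y_p,W,Z)$ is the number of hyperedges meeting at least two of its parts; $\mathrm{cost}(W,Z)$ is the number of hyperedges $e$ with $e\subseteq W\cup Z$, $e\cap W\ne\emptyset$, $e\cap Z\neq\emptyset$; $\alpha(Y_1,\dots,Y_p,W,Z)$ is the number of hyperedges that meet $Z$ and meet at least two of the sets $Y_1,\dots,Y_p,W$; $\beta(Y_1,\dots,Y_p,Z)$ is the number of hyperedges disjoint from $Z$ that meet at least two of $Y_1,\dots,Y_p$; and $\sigma(Y_1,\dots,Y_p,W,Z):=\mathrm{cost}(Y_1,\dots,Y_p,W,Z)+\mathrm{cost}(W,Z)+\alpha(Y_1,\dots,Y_p,W,Z)+\beta(Y_1,\dots,Y_p,Z)$. *)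

(* Defs.v *)
From mathcomp Require Import all_boot.
Set Implicit Arguments. Unset Strict Implicit. Unset Printing Implicit Defensive.

(* A hypergraph on a finite vertex type V: the hyperedges form a finite
   multiset, represented as a sequence of subsets of V. *)
Section Hyper.
Variable V : finType.
Implicit Types (E : seq {set V}) (X Y W Z e : {set V}) (Ys : seq {set V}).

Definition meets e X : bool := e :&: X != set0.

Definition nmeet e (P : seq {set V}) : nat := count (meets e) P.

Definition dcut E X : nat := count (fun e => meets e X && meets e (~: X)) E.

Definition cost E (P : seq {set V}) : nat := count (fun e => 2 <= nmeet e P) E.

Definition cost2 E W Z : nat :=
  count (fun e => [&& e \subset W :|: Z, meets e W & meets e Z]) E.

Definition alpha E Ys W Z : nat :=
  count (fun e => meets e Z && (2 <= nmeet e (rcons Ys W))) E.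

Definition beta E Ys Z : nat :=
  count (fun e => ~~ meets e Z && (2 <= nmeet e Ys)) E.

Definition sigma E Ys W Z : nat :=
  cost E (Ys ++ [:: W; Z]) + cost2 E W Z + alpha E Ys W Z + beta E Ys Z.

End Hyper.

(* Main.v *)
Require Import Defs.
From mathcomp Require Import all_boot zify.

Lemma meetsU (V : finType) (e A B : {set V}) :
  meets e (A :|: B) = meets e A || meets e B.
Proof. by rewrite /meets setIUr setU_eq0 negb_and. Qed.

Lemma meets_sub (V : finType) (e A B : {set V}) :
  (e \subset A :|: B) = ~~ meets e (~: (A :|: B)).
Proof.
rewrite /meets negbK; apply/subsetP/eqP => [H|H x xe].
  apply/setP => x; rewrite !inE; apply/negP => /andP [xe]; have := H x xe; rewrite !inE; by case: (x \in A); case: (x \in B).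
apply/negPn/negP => xn.
have := in_set0 x; rewrite -H !inE xe /=; move: xn; rewrite !inE.
by case: (x \in A); case: (x \in B).
Qed.

Lemma count_step (T : Type) (f1 f2 g1 g2 g3 g4 : pred T) (s : seq T) :
  (forall x, f1 x + f2 x = g1 x + g2 x + g3 x + g4 x) ->
  count f1 s + count f2 s = count g1 s + count g2 s + count g3 s + count g4 s.
Proof.
move=> H; elim: s => [|x s IH] //=.
move: (H x) IH.
move: (nat_of_bool (f1 x)) (nat_of_bool (f2 x)) (nat_of_bool (g1 x))
  (nat_of_bool (g2 x)) (nat_of_bool (g3 x)) (nat_of_bool (g4 x))
  (count f1 s) (count f2 s) (count g1 s) (count g2 s) (count g3 s) (count g4 s).
move=> a b c d e f p q r t u v; lia.
Qed.

Theorem proposition3p2 (V : finType) (E : seq {set V}) (Y1 Y2 W Z : {set V}) :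
  Y1 :|: Y2 :|: W :|: Z = [set: V] ->
  [disjoint Y1 & Y2] -> [disjoint Y1 & W] -> [disjoint Y1 & Z] ->
  [disjoint Y2 & W] -> [disjoint Y2 & Z] -> [disjoint W & Z] ->
  dcut E (Y1 :|: W) + dcut E (Y2 :|: W) = sigma E [:: Y1; Y2] W Z.
Proof.
move=> Hcov d12 d1w d1z d2w d2z dwz.
have mem x : [|| [&& x \in Y1, x \notin Y2, x \notin W & x \notin Z],
                 [&& x \notin Y1, x \in Y2, x \notin W & x \notin Z],
                 [&& x \notin Y1, x \notin Y2, x \in W & x \notin Z] |
                 [&& x \notin Y1, x \notin Y2, x \notin W & x \in Z]].
  have : x \in [set: V] by rewrite inE.
  rewrite -Hcov !inE.
  case h1: (x \in Y1); first by rewrite (disjointFr d12 h1) (disjointFr d1w h1) (disjointFr d1z h1).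
  case h2: (x \in Y2); first by rewrite (disjointFr d2w h2) (disjointFr d2z h2).
  case h3: (x \in W); first by rewrite (disjointFr dwz h3).
  by case: (x \in Z).
have C1 : ~: (Y1 :|: W) = Y2 :|: Z.
  apply/setP => x; rewrite !inE; move: (mem x); by case: (x \in Y1); case: (x \in Y2); case: (x \in W); case: (x \in Z).
have C2 : ~: (Y2 :|: W) = Y1 :|: Z.
  apply/setP => x; rewrite !inE; move: (mem x); by case: (x \in Y1); case: (x \in Y2); case: (x \in W); case: (x \in Z).
have C3 : ~: (W :|: Z) = Y1 :|: Y2.
  apply/setP => x; rewrite !inE; move: (mem x); by case: (x \in Y1); case: (x \in Y2); case: (x \in W); case: (x \in Z).
rewrite /sigma /dcut /cost /cost2 /alpha /beta.
have key (e : {set V}) :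
  (meets e (Y1 :|: W) && meets e (~: (Y1 :|: W))) +
  (meets e (Y2 :|: W) && meets e (~: (Y2 :|: W))) =
  (2 <= nmeet e ([:: Y1; Y2] ++ [:: W; Z])) +
  [&& e \subset W :|: Z, meets e W & meets e Z] +
  (meets e Z && (2 <= nmeet e (rcons [:: Y1; Y2] W))) +
  (~~ meets e Z && (2 <= nmeet e [:: Y1; Y2])).
  rewrite !meetsU C1 C2 !meets_sub C3 /nmeet /= !meetsU.
  by case: (meets e Y1); case: (meets e Y2); case: (meets e W); case: (meets e Z).
exact: count_step.
Qed.
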